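(* Let $p>2$ be an integer, $\theta\in(0,1)$, $\eta\ge0$. For $\bm q\in\mathbb S^{n-1}$ let $\rho=\tfrac12\min_{1\le i\le n}\min\{\|\bm q-\bm e_i\|_2^2,\|\bm q+\bm e_i\|_2^2\}$. Then $$\rho\le\frac{C_{\eta,p}}{\theta(1-\theta)}\Big(\theta(1+\eta^2)^{p/2}+(1-\theta)\eta^p-\mathbb E_\Omega\big(\|\bm q_\Omega\|_2^2+\eta^2\big)^{p/2}\Big),$$ where $C_{\eta,p}=\big((1+\eta^2)^{p/2}+\eta^p-2(0.5+\eta^2)^{p/2}\big)^{-1}$.
   Context: $\bm e_i$ are the standard basis vectors of $\mathbb R^n$. $\Omega$ denotes a random subset of $\{1,\dots,n\}$ in which each index is included independently with probability $\theta$, and $\bm q_\Omega$ is the subvector of $\bm q$ indexed by $\Omega$ (so $\|\bm q_\emptyset\|_2=0$). *)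

(* Defs.v *)
From Stdlib Require Import Reals Lra List.
Import ListNotations.
Open Scope R_scope.

(* Vectors of R^n are functions nat -> R; only indices 0..n-1 matter. *)
Definition rsum (n : nat) (f : nat -> R) : R :=
  fold_right Rplus 0 (map f (seq 0 n)).

Definition normsq (n : nat) (q : nat -> R) : R := rsum n (fun j => (q j)^2).

Definition e_vec (i : nat) : nat -> R := fun j => if Nat.eqb j i then 1 else 0.

(* minimum of g over indices 0..n-1 (meaningful for n >= 1) *)
Definition rmin_idx (n : nat) (g : nat -> R) : R :=
  fold_right Rmin (g 0%nat) (map g (seq 0 n)).

Definition rho (n : nat) (q : nat -> R) : R :=
  / 2 * rmin_idx n (fun i =>
     Rmin (normsq n (fun j => q j - e_vec i j))
          (normsq n (fun j => q j + e_vec i j))).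

(* All subsets Omega of {0,...,n-1}, encoded as masks (list bool of length n):
   index j is in Omega iff nth j m false = true. *)
Fixpoint masks (n : nat) : list (list bool) :=
  match n with
  | O => [nil]
  | S k => map (cons true) (masks k) ++ map (cons false) (masks k)
  end.

Definition mask_prob (theta : R) (m : list bool) : R :=
  fold_right Rmult 1 (map (fun b : bool => if b then theta else 1 - theta) m).

Definition bern_exp (n : nat) (theta : R) (F : list bool -> R) : R :=
  fold_right Rplus 0 (map (fun m => mask_prob theta m * F m) (masks n)).

Definition normsq_sub (n : nat) (m : list bool) (q : nat -> R) : R :=
  rsum n (fun j => if nth j m false then (q j)^2 else 0).

(* x^(p/2) for x >= 0 and integer p, written as (sqrt x)^p *)
Definition hpow (x : R) (p : nat) : R := (sqrt x) ^ p.

Definition C_const (eta : R) (p : nat) : R :=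
  / (hpow (1 + eta^2) p + eta ^ p - 2 * hpow (0.5 + eta^2) p).

(* Main.v *)
Require Import Defs.
From Stdlib Require Import Reals Lra Lia List.
Import ListNotations.
Open Scope R_scope.

Lemma pow_lt_S (x y : R) (n : nat) : 0 <= x < y -> x ^ (S n) < y ^ (S n).
Proof.
  intros [Hx Hxy]. induction n as [|n IH].
  - simpl. lra.
  - change (x * x ^ (S n) < y * y ^ (S n)).
    assert (0 <= x ^ S n) by (apply pow_le; lra).
    nra.
Qed.

Lemma mono_help (m : nat) (t u : R) : 0 <= t -> 0 <= u -> 0 <= (t - u) * (t ^ m - u ^ m).
Proof.
  intros Ht Hu. destruct (Rle_dec t u).
  - assert (t ^ m <= u ^ m) by (apply pow_incr; lra). nra.
  - assert (u ^ m <= t ^ m) by (apply pow_incr; lra). nra.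
Qed.

Lemma mono_help_strict (m : nat) (t u : R) : 0 <= t -> 0 <= u -> t <> u ->
  0 < (t - u) * (t ^ S m - u ^ S m).
Proof.
  intros Ht Hu Htu. destruct (Rle_dec t u).
  - assert (t ^ S m < u ^ S m) by (apply pow_lt_S; lra). nra.
  - assert (u ^ S m < t ^ S m) by (apply pow_lt_S; lra). nra.
Qed.

Lemma amgm (k : nat) (t u : R) : 0 <= t -> 0 <= u ->
  INR (S (S k)) * u ^ k * t ^ 2 <= 2 * t ^ (S (S k)) + INR k * u ^ (S (S k)).
Proof.
  intros Ht Hu. induction k as [|k IH].
  - simpl. lra.
  - pose proof (mono_help (S (S k)) t u Ht Hu) as M1.
    pose proof (mono_help (S k) t u Ht Hu) as M2.
    assert (M3 : 0 <= t * ((t - u) * (t ^ S k - u ^ S k))) by (apply Rmult_le_pos; lra).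
    assert (IH2 : u * (INR (S (S k)) * u ^ k * t ^ 2) <= u * (2 * t ^ (S (S k)) + INR k * u ^ (S (S k))))
      by (apply Rmult_le_compat_l; lra).
    rewrite !S_INR in *. simpl in *.
    set (A := t ^ k) in *. set (B := u ^ k) in *. nra.
Qed.

Lemma amgm_strict (k : nat) (t u : R) : 0 <= t -> 0 <= u -> t <> u ->
  INR (S (S (S k))) * u ^ (S k) * t ^ 2 < 2 * t ^ (S (S (S k))) + INR (S k) * u ^ (S (S (S k))).
Proof.
  intros Ht Hu Htu. pose proof (amgm k t u Ht Hu) as IH.
  pose proof (mono_help_strict (S k) t u Ht Hu Htu) as M1.
  pose proof (mono_help (S k) t u Ht Hu) as M2.
  assert (M3 : 0 <= t * ((t - u) * (t ^ S k - u ^ S k))) by (apply Rmult_le_pos; lra).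
  assert (IH2 : u * (INR (S (S k)) * u ^ k * t ^ 2) <= u * (2 * t ^ (S (S k)) + INR k * u ^ (S (S k))))
    by (apply Rmult_le_compat_l; lra).
  rewrite !S_INR in *. simpl in *.
  set (A := t ^ k) in *. set (B := u ^ k) in *. nra.
Qed.
Lemma tangent (k : nat) (s s' : R) : 0 <= s -> 0 <= s' ->
  hpow s (S (S k)) + INR (S (S k)) / 2 * sqrt s ^ k * (s' - s) <= hpow s' (S (S k)).
Proof.
  intros Hs Hs'. unfold hpow.
  pose proof (amgm k (sqrt s') (sqrt s) (sqrt_pos _) (sqrt_pos _)) as H.
  rewrite pow2_sqrt in H by lra.
  assert (E : sqrt s ^ S (S k) = sqrt s ^ k * s).
  { replace (S (S k)) with (k + 2)%nat by lia. rewrite pow_add, pow2_sqrt; lra. }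
  rewrite E in *. rewrite !S_INR in *.
  match goal with |- ?L <= _ => replace L with (((INR k + 1 + 1) * sqrt s ^ k * s' - INR k * (sqrt s ^ k * s)) / 2) by field end.
  lra.
Qed.

Lemma tangent_strict (k : nat) (s s' : R) : 0 <= s -> 0 <= s' -> s <> s' ->
  hpow s (S (S (S k))) + INR (S (S (S k))) / 2 * sqrt s ^ (S k) * (s' - s) < hpow s' (S (S (S k))).
Proof.
  intros Hs Hs' Hne. unfold hpow.
  assert (Hne' : sqrt s' <> sqrt s).
  { intro E. apply Hne. rewrite <- (pow2_sqrt s) by lra. rewrite <- (pow2_sqrt s') by lra. rewrite E; auto. }
  pose proof (amgm_strict k (sqrt s') (sqrt s) (sqrt_pos _) (sqrt_pos _) Hne') as H.
  rewrite pow2_sqrt in H by lra.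
  assert (E : sqrt s ^ S (S (S k)) = sqrt s ^ S k * s).
  { replace (S (S (S k))) with (S k + 2)%nat by lia. rewrite pow_add, pow2_sqrt; lra. }
  rewrite E in *. rewrite !S_INR in *.
  match goal with |- ?L < _ => replace L with (((INR k + 1 + 1 + 1) * sqrt s ^ S k * s' - (INR k + 1) * (sqrt s ^ S k * s)) / 2) by field end.
  lra.
Qed.

Lemma hconv (k : nat) (l s1 s2 : R) : 0 <= s1 -> 0 <= s2 -> 0 <= l <= 1 ->
  hpow (l * s1 + (1 - l) * s2) (S (S k)) <= l * hpow s1 (S (S k)) + (1 - l) * hpow s2 (S (S k)).
Proof.
  intros H1 H2 Hl.
  set (s := l * s1 + (1 - l) * s2).
  assert (Hs : 0 <= s) by (unfold s; nra).
  pose proof (tangent k s s1 Hs H1) as T1.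
  pose proof (tangent k s s2 Hs H2) as T2.
  set (c := INR (S (S k)) / 2 * sqrt s ^ k) in *.
  assert (T1' : l * (hpow s (S (S k)) + c * (s1 - s)) <= l * hpow s1 (S (S k))) by (apply Rmult_le_compat_l; lra).
  assert (T2' : (1-l) * (hpow s (S (S k)) + c * (s2 - s)) <= (1-l) * hpow s2 (S (S k))) by (apply Rmult_le_compat_l; lra).
  assert (Z : l * (c * (s1 - s)) + (1 - l) * (c * (s2 - s)) = 0) by (unfold s; ring).
  nra.
Qed.

Lemma hpow_sq (eta : R) (p : nat) : 0 <= eta -> hpow (eta ^ 2) p = eta ^ p.
Proof. intros. unfold hpow. rewrite sqrt_pow2; auto. Qed.

Lemma hpow_nonneg (x : R) (p : nat) : 0 <= hpow x p.
Proof. unfold hpow. apply pow_le, sqrt_pos. Qed.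

Lemma D_pos (k : nat) (eta : R) : 0 <= eta ->
  0 < hpow (1 + eta^2) (S (S (S k))) + eta ^ (S (S (S k))) - 2 * hpow (0.5 + eta^2) (S (S (S k))).
Proof.
  intros He. set (a := eta ^ 2). assert (Ha : 0 <= a) by (unfold a; nra).
  rewrite <- (hpow_sq eta _ He). fold a.
  pose proof (tangent_strict k (0.5 + a) (1 + a) ltac:(lra) ltac:(lra) ltac:(lra)) as T1.
  pose proof (tangent (S k) (0.5 + a) a ltac:(lra) ltac:(lra)) as T2.
  lra.
Qed.

Lemma chord (k : nat) (eta x : R) : 0 <= eta -> 0 <= x <= 1 ->
  let h0 := eta ^ S (S k) in let h1 := hpow (1 + eta^2) (S (S k)) in
  let hm := hpow (0.5 + eta^2) (S (S k)) in
  0 <= h1 + h0 - 2 * hm ->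
  hpow (x + eta^2) (S (S k)) <= (1 - x) * h0 + x * h1 - (h1 + h0 - 2 * hm) * (x * (1 - x)).
Proof.
  intros He Hx h0 h1 hm HD.
  set (a := eta ^ 2) in *. assert (Ha : 0 <= a) by (unfold a; nra).
  assert (Eh0 : h0 = hpow a (S (S k))) by (unfold h0, a; rewrite hpow_sq; auto).
  set (D := h1 + h0 - 2 * hm) in *.
  destruct (Rle_dec x 0.5).
  - pose proof (hconv k (1 - 2 * x) a (0.5 + a) Ha ltac:(lra) ltac:(lra)) as C.
    replace ((1 - 2 * x) * a + (1 - (1 - 2 * x)) * (0.5 + a)) with (x + a) in C by lra.
    rewrite <- Eh0 in C. fold hm in C.
    assert (0 <= D * (x * x)) by (apply Rmult_le_pos; nra).
    unfold D in *. nra.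
  - pose proof (hconv k (2 - 2 * x) (0.5 + a) (1 + a) ltac:(lra) ltac:(lra) ltac:(lra)) as C.
    replace ((2 - 2 * x) * (0.5 + a) + (1 - (2 - 2 * x)) * (1 + a)) with (x + a) in C by lra.
    fold hm h1 in C.
    assert (0 <= D * ((1-x) * (1-x))) by (apply Rmult_le_pos; nra).
    unfold D in *. nra.
Qed.
Definition lsum {A} (l : list A) (f : A -> R) := fold_right Rplus 0 (map f l).

Lemma lsum_plus {A} (l : list A) f g : lsum l (fun x => f x + g x) = lsum l f + lsum l g.
Proof. induction l; unfold lsum in *; simpl; [ring|]. rewrite IHl; ring. Qed.
Lemma lsum_scal {A} (l : list A) c f : lsum l (fun x => c * f x) = c * lsum l f.
Proof. induction l; unfold lsum in *; simpl; [ring|]. rewrite IHl; ring. Qed.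
Lemma lsum_ext {A} (l : list A) f g : (forall x, In x l -> f x = g x) -> lsum l f = lsum l g.
Proof. intro H. unfold lsum. f_equal. apply map_ext_in. auto. Qed.
Lemma lsum_le {A} (l : list A) f g : (forall x, In x l -> f x <= g x) -> lsum l f <= lsum l g.
Proof. induction l; intro H; unfold lsum in *; simpl; [lra|].
  apply Rplus_le_compat; [apply H; simpl; auto| apply IHl; intros; apply H; simpl; auto]. Qed.
Lemma lsum_app {A} (l l' : list A) f : lsum (l ++ l') f = lsum l f + lsum l' f.
Proof. induction l; unfold lsum in *; simpl; [ring|]. rewrite IHl; ring. Qed.
Lemma lsum_map {A B} (l : list A) (g : A -> B) f : lsum (map g l) f = lsum l (fun x => f (g x)).
Proof. unfold lsum. rewrite map_map. auto. Qed.
Lemma lsum_zero {A} (l : list A) : lsum l (fun _ => 0) = 0.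
Proof. induction l; unfold lsum in *; simpl; lra. Qed.

Lemma rsum_lsum n f : rsum n f = lsum (seq 0 n) f.
Proof. reflexivity. Qed.

Lemma rsum_succ n f : rsum (S n) f = f 0%nat + rsum n (fun j => f (S j)).
Proof. rewrite !rsum_lsum. change (lsum (seq 0 (S n)) f) with (f 0%nat + lsum (seq 1 n) f). rewrite <- seq_shift, lsum_map. reflexivity. Qed.

Lemma rsum_delta n i c : (i < n)%nat -> rsum n (fun j => e_vec i j * c j) = c i.
Proof.
  revert i c. induction n as [|n IH]; intros i c Hi; [lia|].
  rewrite rsum_succ. destruct i as [|i].
  - unfold e_vec at 1; simpl.
    rewrite rsum_lsum, (lsum_ext _ _ (fun _ => 0)), lsum_zero; [ring|].
    intros x _. unfold e_vec; simpl. ring.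
  - change (rsum n (fun j => e_vec (S i) (S j) * c (S j))) with (rsum n (fun j => e_vec i j * c (S j))).
    replace (e_vec (S i) 0) with 0 by reflexivity.
    rewrite (IH i (fun j => c (S j))) by lia. ring.
Qed.

Lemma bern_lsum n th F : bern_exp n th F = lsum (masks n) (fun m => mask_prob th m * F m).
Proof. reflexivity. Qed.

Lemma bern_succ n th F : bern_exp (S n) th F =
  th * bern_exp n th (fun m => F (true :: m)) + (1 - th) * bern_exp n th (fun m => F (false :: m)).
Proof.
  rewrite !bern_lsum. simpl masks. rewrite lsum_app, !lsum_map, <- !lsum_scal.
  f_equal; apply lsum_ext; intros; unfold mask_prob; simpl; ring.
Qed.

Lemma bern_ext n th F G : (forall m, F m = G m) -> bern_exp n th F = bern_exp n th G.
Proof. intro H. rewrite !bern_lsum. apply lsum_ext. intros; rewrite H; auto. Qed.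
Lemma bern_plus n th F G : bern_exp n th (fun m => F m + G m) = bern_exp n th F + bern_exp n th G.
Proof. rewrite !bern_lsum, <- lsum_plus. apply lsum_ext; intros; ring. Qed.
Lemma bern_scal n th c F : bern_exp n th (fun m => c * F m) = c * bern_exp n th F.
Proof. rewrite !bern_lsum, <- lsum_scal. apply lsum_ext; intros; ring. Qed.
Lemma bern_const n th c : bern_exp n th (fun _ => c) = c.
Proof. induction n as [|n IH]; [unfold bern_exp, mask_prob; simpl; ring|].
  rewrite bern_succ, IH. ring. Qed.

Lemma mask_prob_nonneg th m : 0 <= th <= 1 -> 0 <= mask_prob th m.
Proof. intro H. induction m as [|b m IH]; unfold mask_prob in *; simpl; [lra|].
  apply Rmult_le_pos; auto. destruct b; lra. Qed.

Lemma bern_le n th F G : 0 <= th <= 1 -> (forall m, F m <= G m) -> bern_exp n th F <= bern_exp n th G.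
Proof. intros Ht H. rewrite !bern_lsum. apply lsum_le. intros.
  apply Rmult_le_compat_l; auto. apply mask_prob_nonneg; auto. Qed.

Lemma nsub_succ n b m q : normsq_sub (S n) (b :: m) q =
  (if b then q 0%nat ^ 2 else 0) + normsq_sub n m (fun j => q (S j)).
Proof. unfold normsq_sub. rewrite rsum_succ. reflexivity. Qed.

Lemma normsq_succ n q : normsq (S n) q = q 0%nat ^ 2 + normsq n (fun j => q (S j)).
Proof. unfold normsq. rewrite rsum_succ. reflexivity. Qed.

Lemma E1 n th q : bern_exp n th (fun m => normsq_sub n m q) = th * normsq n q.
Proof.
  revert q. induction n as [|n IH]; intro q.
  - unfold bern_exp, mask_prob, normsq_sub, normsq, rsum; simpl; ring.
  - rewrite bern_succ, normsq_succ.
    rewrite (bern_ext _ _ _ (fun m => q 0%nat ^ 2 + normsq_sub n m (fun j => q (S j))))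
      by (intro; rewrite nsub_succ; auto).
    rewrite (bern_ext _ _ (fun m => normsq_sub (S n) (false :: m) q) (fun m => normsq_sub n m (fun j => q (S j))))
      by (intro; rewrite nsub_succ; simpl; ring).
    rewrite bern_plus, bern_const, IH. ring.
Qed.

Lemma E2 n th q : bern_exp n th (fun m => (normsq_sub n m q) ^ 2) =
  th ^ 2 * (normsq n q) ^ 2 + th * (1 - th) * rsum n (fun j => q j ^ 4).
Proof.
  revert q. induction n as [|n IH]; intro q.
  - unfold bern_exp, mask_prob, normsq_sub, normsq, rsum; simpl; ring.
  - rewrite bern_succ, normsq_succ, rsum_succ.
    rewrite (bern_ext _ _ _ (fun m => (q 0%nat ^ 2) ^ 2 + ((2 * q 0%nat ^ 2) * normsq_sub n m (fun j => q (S j))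
        + normsq_sub n m (fun j => q (S j)) ^ 2)))
      by (intro; rewrite nsub_succ; ring).
    rewrite (bern_ext _ _ (fun m => normsq_sub (S n) (false :: m) q ^ 2) (fun m => normsq_sub n m (fun j => q (S j)) ^ 2))
      by (intro; rewrite nsub_succ; simpl; ring).
    rewrite !bern_plus, bern_const, bern_scal, E1, IH. ring.
Qed.

Lemma nsub_bounds n m q : 0 <= normsq_sub n m q <= normsq n q.
Proof.
  unfold normsq_sub, normsq. rewrite !rsum_lsum. split.
  - apply Rle_trans with (lsum (seq 0 n) (fun _ => 0)); [rewrite lsum_zero; lra|]. apply lsum_le. intros; cbv beta; destruct (nth x m false); nra.
  - apply lsum_le. intros; cbv beta; destruct (nth x m false); nra.
Qed.

Lemma rmin_le (l : list nat) g x0 i : In i l -> fold_right Rmin x0 (map g l) <= g i.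
Proof.
  induction l as [|a l IH]; simpl; [tauto|]. intros [->|H].
  - apply Rmin_l.
  - eapply Rle_trans; [apply Rmin_r|]. auto.
Qed.

Lemma normsq_minus n q i s f : (i < n)%nat -> (forall j, f j = q j + s * e_vec i j) ->
  normsq n f = normsq n q + 2 * s * q i + s ^ 2.
Proof.
  intros Hi Hf. unfold normsq.
  rewrite !rsum_lsum.
  rewrite (lsum_ext _ _ (fun j => q j ^ 2 + ((2 * s) * (e_vec i j * q j) + s ^ 2 * (e_vec i j * 1)))).
  - rewrite !lsum_plus, !lsum_scal, <- !rsum_lsum, !rsum_delta by auto. ring.
  - intros x _. rewrite Hf. unfold e_vec. destruct (Nat.eqb x i); ring.
Qed.

Lemma rho_bound n q : (1 <= n)%nat -> normsq n q = 1 -> rho n q <= 1 - rsum n (fun j => q j ^ 4).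
Proof.
  intros Hn Hq.
  assert (Hi : forall i, (i < n)%nat -> rho n q <= 1 - q i ^ 2).
  { intros i Hi.
    assert (R1 : rho n q <= / 2 * Rmin (normsq n (fun j => q j - e_vec i j)) (normsq n (fun j => q j + e_vec i j))).
    { unfold rho. apply Rmult_le_compat_l; [lra|]. unfold rmin_idx.
      apply (rmin_le _ (fun i0 => Rmin (normsq n (fun j => q j - e_vec i0 j)) (normsq n (fun j => q j + e_vec i0 j)))).
      apply in_seq. lia. }
    assert (A1 : normsq n (fun j => q j - e_vec i j) = 2 - 2 * q i).
    { rewrite (normsq_minus n q i (-1)) by (auto; intro; ring). rewrite Hq. ring. }
    assert (A2 : normsq n (fun j => q j + e_vec i j) = 2 + 2 * q i).
    { rewrite (normsq_minus n q i 1) by (auto; intro; ring). rewrite Hq. ring. }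
    rewrite A1, A2 in R1.
    assert (M1 := Rmin_l (2 - 2 * q i) (2 + 2 * q i)).
    assert (M2 := Rmin_r (2 - 2 * q i) (2 + 2 * q i)).
    assert (Q1 : q i ^ 2 <= 1).
    { rewrite <- Hq, <- (rsum_delta n i (fun j => q j ^ 2)) by auto. unfold normsq. rewrite !rsum_lsum.
      apply lsum_le. intros x _. unfold e_vec. destruct (Nat.eqb x i); nra. }
    destruct (Rle_dec 0 (q i)); nra. }
  assert (E : rho n q = lsum (seq 0 n) (fun j => rho n q * q j ^ 2)).
  { rewrite lsum_scal, <- rsum_lsum. fold (normsq n q). rewrite Hq. ring. }
  rewrite E, rsum_lsum.
  assert (E2 : 1 - lsum (seq 0 n) (fun j => q j ^ 4) = lsum (seq 0 n) (fun j => q j ^ 2 - q j ^ 4)).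
  { rewrite <- Hq. unfold normsq. rewrite rsum_lsum.
    rewrite (lsum_ext _ (fun j => q j ^ 2 - q j ^ 4) (fun j => q j ^ 2 + (-1) * q j ^ 4)) by (intros; ring).
    rewrite lsum_plus, lsum_scal. ring. }
  rewrite E2. apply lsum_le. intros x Hx. apply in_seq in Hx.
  assert (H := Hi x ltac:(lia)).
  assert (0 <= q x ^ 2) by nra. nra.
Qed.
Theorem mainTheorem11 (n p : nat) (theta eta : R) (q : nat -> R) :
  (1 <= n)%nat -> (2 < p)%nat -> 0 < theta < 1 -> 0 <= eta ->
  normsq n q = 1 ->
  rho n q <=
    C_const eta p / (theta * (1 - theta)) *
    (theta * hpow (1 + eta^2) p + (1 - theta) * eta ^ p
     - bern_exp n theta (fun m => hpow (normsq_sub n m q + eta^2) p)).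
Proof.
  intros Hn Hp Hth He Hq.
  destruct p as [|[|[|k]]]; try lia.
  pose proof (D_pos k eta He) as HD.
  set (h1 := hpow (1 + eta ^ 2) (S (S (S k)))) in *.
  set (h0 := eta ^ (S (S (S k)))) in *.
  set (hm := hpow (0.5 + eta ^ 2) (S (S (S k)))) in *.
  set (D := h1 + h0 - 2 * hm) in *.
  set (S4 := rsum n (fun j => q j ^ 4)).
  assert (Hb : bern_exp n theta (fun m => hpow (normsq_sub n m q + eta ^ 2) (S (S (S k))))
     <= h0 + (h1 - h0 - D) * theta + D * (theta ^ 2 + theta * (1 - theta) * S4)).
  { apply Rle_trans with (bern_exp n theta (fun m => h0 + ((h1 - h0 - D) * normsq_sub n m q + D * normsq_sub n m q ^ 2))).
    - apply bern_le; [lra|]. intro m.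
      pose proof (nsub_bounds n m q) as B. rewrite Hq in B.
      pose proof (chord (S k) eta (normsq_sub n m q) He B) as C.
      cbv zeta in C. fold h0 h1 hm in C. fold D in C. specialize (C ltac:(lra)).
      nra.
    - rewrite !bern_plus, bern_const, !bern_scal, E1, E2, Hq. unfold S4. right; ring. }
  pose proof (rho_bound n q Hn Hq) as Hr. fold S4 in Hr.
  assert (HK : 0 < theta * (1 - theta)) by nra.
  unfold C_const. fold h1 h0 hm D.
  set (G := theta * h1 + (1 - theta) * h0 - bern_exp n theta (fun m => hpow (normsq_sub n m q + eta ^ 2) (S (S (S k))))) in *.
  assert (HG : D * (theta * (1 - theta)) * (1 - S4) <= G) by (unfold G; nra).
  apply Rle_trans with (1 - S4); auto.
  replace (1 - S4) with (/ D / (theta * (1 - theta)) * (D * (theta * (1 - theta)) * (1 - S4))) by (field; lra).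
  apply Rmult_le_compat_l; auto.
  apply Rmult_le_pos; left; apply Rinv_0_lt_compat; lra.
Qed.
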